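(* Let $\varepsilon>0$ and $m(x)=\tanh x$. For $\mathcal{E}\in(0,1)$ let $x_\pm=\pm\operatorname{arctanh}(\sqrt{\mathcal{E}})$ be the two solutions of $\tanh^2 x=\mathcal{E}$, and define $$\Phi(\mathcal{E}):=\frac{1}{\varepsilon}\int_{x_-}^{x_+}\sqrt{\mathcal{E}-\tanh^2 x}\,dx,$$ with $\Phi(0):=0$. Then $\Phi(\mathcal{E})=\frac{\pi}{\varepsilon}\bigl(1-\sqrt{1-\mathcal{E}}\bigr)$ for $\mathcal{E}\in[0,1)$. Consequently, for $\sigma_{\mathcal{D}}\in\{-1,+1\}$ and integers $n\ge0$ with $0\le\varepsilon\bigl(n+\frac{\sigma_{\mathcal{D}}+1}{2}\bigr)<1$, the (exact, error-free) modified Bohr–Sommerfeld condition $$\Phi(\mathcal{E})=\Bigl(n+\frac{\sigma_{\mathcal{D}}+1}{2}\Bigr)\pi$$ has the unique solution $\mathcal{E}\in[0,1)$ given by $$\mathcal{E}_n^{(\sigma_{\mathcal{D}})}=1-\Bigl[1-\varepsilon\Bigl(n+\frac{\sigma_{\mathcal{D}}+1}{2}\Bigr)\Bigr]^2 .$$ In particular $\mathcal{E}_n^{(-1)}=1-(1-\varepsilon n)^2=\lambda_n^{(+)}$ and $\mathcal{E}_n^{(+1)}=1-(1-\varepsilon(n+1))^2=\lambda_n^{(-)}$ coincide exactly with the Pöschl–Teller eigenvalues of the upper and lower components of $D_\varepsilon^2$, and $n=0$, $\sigma_{\mathcal{D}}=-1$ gives $\mathcal{E}=0$.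
   Context: $D_\varepsilon=\begin{bmatrix}0 & m-\varepsilon\partial_x\\ m+\varepsilon\partial_x & 0\end{bmatrix}$ with $m=\tanh$, so $D_\varepsilon^2=\operatorname{diag}(-\varepsilon^2\partial_x^2+\tanh^2x-\varepsilon\operatorname{sech}^2x,\;-\varepsilon^2\partial_x^2+\tanh^2x+\varepsilon\operatorname{sech}^2x)$; the pseudo-spin index $\sigma_{\mathcal{D}}=-1$ labels the upper component and $\sigma_{\mathcal{D}}=+1$ the lower. The numbers $\lambda_k^{(+)}=1-(1-\varepsilon k)^2$ and $\lambda_k^{(-)}=1-(1-\varepsilon(k+1))^2$ are the discrete eigenvalues of the upper and lower components respectively. *)

(* Defs.v *)
From Stdlib Require Import Reals.
From Coquelicot Require Import Coquelicot.
Open Scope R_scope.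

Definition tanh (x : R) : R := (exp x - exp (- x)) / (exp x + exp (- x)).
Definition atanh (y : R) : R := ln ((1 + y) / (1 - y)) / 2.

Definition x_plus (E : R) : R := atanh (sqrt E).
Definition x_minus (E : R) : R := - atanh (sqrt E).

Definition Phi (eps E : R) : R :=
  if Req_EM_T E 0 then 0
  else / eps * RInt (fun x => sqrt (E - (tanh x) ^ 2)) (x_minus E) (x_plus E).

Definition lambda_plus (eps : R) (k : nat) : R := 1 - (1 - eps * INR k) ^ 2.
Definition lambda_minus (eps : R) (k : nat) : R := 1 - (1 - eps * (INR k + 1)) ^ 2.

Definition shift (n : nat) (sigma : Z) : R := INR n + (IZR sigma + 1) / 2.
Definition E_level (eps : R) (n : nat) (sigma : Z) : R := 1 - (1 - eps * shift n sigma) ^ 2.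

(* Main.v *)
Require Import Defs.
From Stdlib Require Import Reals Lra Psatz.
From Coquelicot Require Import Coquelicot.
Open Scope R_scope.

Definition Kf (c v : R) : R :=
  2 * (1 - c) * atan v - c * atan ((c - 1) * 2 * v * (1 - v * v) / ((1 - v * v) ^ 2 + 4 * c * v * v)).
Definition hf (c v : R) : R :=
  2 * (1 - c * c) * (1 - v * v) ^ 2 / ((1 + v * v) * ((1 - v * v) ^ 2 + 4 * c * c * v * v)).

Lemma den_pos (c v : R) : 0 < c -> 0 < (1 - v * v) ^ 2 + 4 * c * v * v.
Proof. intros Hc. destruct (Req_dec v 0) as [->|Hv]. nra.
  assert (0 < v * v) by (apply Rsqr_pos_lt in Hv; exact Hv). assert (0 < c * (v*v)) by nra. pose proof (pow2_ge_0 (1 - v*v)). replace (4*c*v*v) with (4*(c*(v*v))) by ring. lra. Qed.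

Lemma Kf_deriv (c v : R) : 0 < c -> is_derive (Kf c) v (hf c v).
Proof.
  intros Hc. pose proof (den_pos c v Hc) as HD.
  assert (HD2 : 0 < (1 - v * v) ^ 2 + 4 * (c * c) * v * v) by (apply den_pos; nra).
  unfold Kf, hf. auto_derive.
  - lra.
  - assert (Hkey : ((1 + - (v * v)) * (1 + - (v * v)) + 4 * c * v * v) *
      ((1 + - (v * v)) * (1 + - (v * v)) + 4 * c * v * v) +
      (c - 1) * 2 * v * (1 + - (v * v)) * ((c - 1) * 2 * v * (1 + - (v * v)))
      = (1 + v*v)^2 * ((1 - v * v) ^ 2 + 4 * (c * c) * v * v)) by ring.
    assert (H1 : 0 < 1 + v*v) by nra.
    field. rewrite Hkey. repeat split.
    all: try (apply Rgt_not_eq; first [ nra | apply Rmult_lt_0_compat; nra ]).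
    all: try (replace ((1 + - (v * v)) * (1 + - (v * v)) + 4 * c * v * v) with ((1 - v * v) ^ 2 + 4 * c * v * v) by ring; lra).
    all: try (replace ((1 - v * v) ^ 2 + 4 * c * c * v * v) with ((1 - v * v) ^ 2 + 4 * (c * c) * v * v) by ring; lra).

Qed.

Lemma tanh_alt (z : R) : Defs.tanh z = (exp (2*z) - 1) / (exp (2*z) + 1).
Proof.
  unfold Defs.tanh. replace (2*z) with (z + z) by ring. rewrite exp_plus, exp_Ropp.
  pose proof (exp_pos z). field. split; nra.
Qed.

Lemma tanh_atanh (u : R) : -1 < u < 1 -> Defs.tanh (Defs.atanh u) = u.
Proof.
  intros Hu. rewrite tanh_alt. unfold Defs.atanh.
  assert (Hy : 0 < (1 + u) / (1 - u)) by (apply Rdiv_lt_0_compat; lra).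
  replace (2 * (ln ((1 + u) / (1 - u)) / 2)) with (ln ((1 + u) / (1 - u))) by field.
  rewrite exp_ln by exact Hy. field. split; lra.
Qed.

Lemma atanh_opp (u : R) : -1 < u < 1 -> Defs.atanh (- u) = - Defs.atanh u.
Proof.
  intros Hu. unfold Defs.atanh.
  replace ((1 + - u) / (1 - - u)) with (/ ((1 + u) / (1 - u))) by (field; lra).
  rewrite ln_Rinv by (apply Rdiv_lt_0_compat; lra). field.
Qed.

Lemma u_bound (s v : R) : 0 < s < 1 -> -1 < 2 * s * v / (1 + v * v) < 1.
Proof.
  intros Hs. assert (H1 : 0 < 1 + v*v) by nra.
  assert (A1 : 0 < (1 + v*v) - 2*s*v) by (pose proof (pow2_ge_0 (v - s)); nra).
  assert (A2 : 0 < (1 + v*v) + 2*s*v) by (pose proof (pow2_ge_0 (v + s)); nra).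
  assert (B1 : 0 < ((1 + v*v) - 2*s*v) / (1 + v*v)) by (apply Rdiv_lt_0_compat; lra).
  assert (B2 : 0 < ((1 + v*v) + 2*s*v) / (1 + v*v)) by (apply Rdiv_lt_0_compat; lra).
  replace (((1 + v*v) - 2*s*v) / (1 + v*v)) with (1 - 2 * s * v / (1 + v * v)) in B1 by (field; lra).
  replace (((1 + v*v) + 2*s*v) / (1 + v*v)) with (1 + 2 * s * v / (1 + v * v)) in B2 by (field; lra).
  lra.
Qed.

Lemma f_cont (E x : R) : continuous (fun x => sqrt (E - Defs.tanh x ^ 2)) x.
Proof.
  apply continuous_sqrt_comp. apply (ex_derive_continuous (K := R_AbsRing) (V := R_NormedModule)).
  unfold Defs.tanh. auto_derive. pose proof (exp_pos x). pose proof (exp_pos (-x)). lra.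
Qed.

Lemma integral_value (E : R) : 0 < E < 1 ->
  RInt (fun x => sqrt (E - Defs.tanh x ^ 2)) (x_minus E) (x_plus E) = PI * (1 - sqrt (1 - E)).
Proof.
  intros HE.
  set (s := sqrt E). set (c := sqrt (1 - E)).
  assert (Hs0 : 0 < s) by (apply sqrt_lt_R0; lra).
  assert (Hc : 0 < c) by (apply sqrt_lt_R0; lra).
  assert (Hss : s * s = E) by (apply sqrt_sqrt; lra).
  assert (Hcc : c * c = 1 - E) by (apply sqrt_sqrt; lra).
  assert (Hs1 : s < 1) by nra.
  assert (Hsc : s * s = 1 - c * c) by lra.
  set (g := fun v => Defs.atanh (2 * s * v / (1 + v * v))).
  set (dg := fun v => 2 * s * (1 - v * v) / ((1 + v * v) ^ 2 - 4 * s * s * v * v)).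
  assert (Hden : forall v, (1 + v * v) ^ 2 - 4 * s * s * v * v = (1 - v * v) ^ 2 + 4 * (c * c) * v * v).
  { intros v. replace (4 * s * s * v * v) with (4 * (s * s) * (v * v)) by ring. rewrite Hsc. ring. }
  assert (Hdenp : forall v, 0 < (1 + v * v) ^ 2 - 4 * s * s * v * v).
  { intros v. rewrite Hden. apply den_pos. nra. }
  assert (Hg1 : g 1 = x_plus E).
  { unfold g, x_plus. fold s. f_equal. field. }
  assert (Hgm1 : g (-1) = x_minus E).
  { unfold g, x_minus. fold s. rewrite <- atanh_opp by lra. f_equal. field. }
  assert (Hder : forall v, Rmin (-1) 1 <= v <= Rmax (-1) 1 -> is_derive g v (dg v) /\ continuous dg v).
  { intros v _. pose proof (u_bound s v (conj Hs0 Hs1)) as Hu. pose proof (Hdenp v) as Hd.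
    assert (H1 : 0 < 1 + v*v) by nra.
    assert (A1 : 0 < (1 + v*v) - 2*s*v) by (pose proof (pow2_ge_0 (v - s)); nra).
    assert (A2 : 0 < (1 + v*v) + 2*s*v) by (pose proof (pow2_ge_0 (v + s)); nra).
    split.
    - unfold g, dg, Defs.atanh. auto_derive.
      + repeat split; try lra. apply Rdiv_lt_0_compat; lra.
      + field. repeat split; lra.
    - apply (ex_derive_continuous (K := R_AbsRing) (V := R_NormedModule)). unfold dg. auto_derive. lra.
  }
  rewrite <- Hg1, <- Hgm1.
  rewrite <- (RInt_comp (fun x => sqrt (E - Defs.tanh x ^ 2)) g dg (-1) 1 (fun x _ => f_cont E (g x)) Hder).
  transitivity (RInt (hf c) (-1) 1).
  { apply RInt_ext. rewrite Rmin_left, Rmax_right by lra. intros v Hv.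
    pose proof (u_bound s v (conj Hs0 Hs1)) as Hu. pose proof (Hdenp v) as Hd.
    assert (H1 : 0 < 1 + v*v) by nra.
    unfold g. rewrite tanh_atanh by exact Hu.
    assert (Hq : 0 <= s * (1 - v*v) / (1 + v*v)).
    { apply Rmult_le_pos; [apply Rmult_le_pos; nra | left; apply Rinv_0_lt_compat; lra]. }
    replace (E - (2 * s * v / (1 + v * v)) ^ 2) with ((s * (1 - v*v) / (1 + v*v)) ^ 2).
    2:{ rewrite <- Hss. field. lra. }
    rewrite sqrt_pow2 by exact Hq.
    unfold scal; simpl; unfold mult; simpl.
    unfold dg, hf. rewrite Hden. replace (1 - c * c) with (s * s) by lra.
    field. pose proof (den_pos (c*c) v ltac:(nra)). split; lra. }
  apply is_RInt_unique.
  assert (HI := is_RInt_derive (Kf c) (hf c) (-1) 1 (fun x _ => Kf_deriv c x Hc)).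
  replace (PI * (1 - c)) with (minus (Kf c 1) (Kf c (-1))).
  { apply HI. intros x _. apply (ex_derive_continuous (K := R_AbsRing) (V := R_NormedModule)).
    unfold hf. pose proof (den_pos (c*c) x ltac:(nra)). auto_derive.
    assert (0 < 1 + x*x) by nra.
    apply Rgt_not_eq. apply Rmult_lt_0_compat. lra.
    replace ((1 + - (x * x)) * ((1 + - (x * x)) * 1) + 4 * c * c * x * x) with ((1 - x * x) ^ 2 + 4 * (c * c) * x * x) by ring. lra. }
  unfold minus, plus, opp; simpl. unfold Kf.
  replace ((c - 1) * 2 * 1 * (1 - 1 * 1) / ((1 - 1 * 1) ^ 2 + 4 * c * 1 * 1)) with 0 by (unfold Rdiv; ring).
  replace ((c - 1) * 2 * -1 * (1 - -1 * -1) / ((1 - -1 * -1) ^ 2 + 4 * c * -1 * -1)) with 0 by (unfold Rdiv; ring).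
  replace (-1) with (- (1)) by ring. rewrite atan_0, atan_opp, atan_1. field.
Qed.

Lemma part1 (eps : R) (heps : 0 < eps) :
  forall E : R, 0 <= E < 1 -> Phi eps E = PI / eps * (1 - sqrt (1 - E)).
Proof.
  intros E HE. unfold Phi. destruct (Req_EM_T E 0) as [->|Hn].
  - rewrite Rminus_0_r, sqrt_1. ring.
  - rewrite integral_value by lra. field. lra.
Qed.

Theorem proposition5p1 (eps : R) (heps : 0 < eps) :
  (forall E : R, 0 <= E < 1 -> Phi eps E = PI / eps * (1 - sqrt (1 - E))) /\
  (forall (sigma : Z) (n : nat),
      (sigma = (-1)%Z \/ sigma = 1%Z) ->
      0 <= eps * shift n sigma < 1 ->
      (0 <= E_level eps n sigma < 1 /\
       forall E : R, 0 <= E < 1 ->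
         (Phi eps E = shift n sigma * PI <-> E = E_level eps n sigma))) /\
  (forall n : nat, E_level eps n (-1)%Z = lambda_plus eps n) /\
  (forall n : nat, E_level eps n 1%Z = lambda_minus eps n) /\
  E_level eps 0 (-1)%Z = 0.
Proof.
  split; [exact (part1 eps heps)|].
  split.
  { intros sigma n _ Hk. set (k := shift n sigma) in *. unfold E_level. fold k.
    split; [nra|].
    intros E HE. rewrite (part1 eps heps E HE).
    pose proof PI_RGT_0 as HPI.
    assert (Hq0 : 0 <= sqrt (1 - E)) by apply sqrt_pos.
    assert (Hqq : sqrt (1 - E) * sqrt (1 - E) = 1 - E) by (apply sqrt_sqrt; lra).
    split.
    - intros H.
      assert (H2 : 1 - sqrt (1 - E) = eps * k).
      { apply Rmult_eq_reg_l with (PI / eps).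
        + rewrite H. field. lra.
        + apply Rgt_not_eq. apply Rdiv_lt_0_compat; lra. }
      replace (1 - eps * k) with (sqrt (1 - E)) by lra. simpl. lra.
    - intros ->.
      replace (1 - (1 - (1 - eps * k) ^ 2)) with ((1 - eps * k) ^ 2) by ring.
      rewrite sqrt_pow2 by lra. field. lra. }
  split.
  { intros n. unfold E_level, lambda_plus, shift. f_equal. f_equal. f_equal. field. }
  split.
  { intros n. unfold E_level, lambda_minus, shift. f_equal. f_equal. f_equal. field. }
  unfold E_level, shift. simpl. field.
Qed.
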